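(* Let $A,Q,C_1,\dots,C_M,R_1,\dots,R_M$ be real scalars with $Q\ge0$ and $R_m>0$, and for $P\ge0$ define $f(P)=A^2P+Q$ and $g_m(P)=A^2P+Q-\frac{A^2C_m^2P^2}{C_m^2P+R_m}$, $m=1,\dots,M$. Let $\mathcal{F}$ be any function formed by composition (in any order) of any of the functions $f,g_1,\dots,g_M,\mathrm{id}$. Then: (i) $\mathcal{F}$ is either of the affine form $\mathcal{F}(P)=aP+b$ for some $a,b\ge0$, or of the linear fractional form $\mathcal{F}(P)=\frac{aP+b}{cP+d}$ for some $a,b,c,d\ge0$ with $ad-bc\ge0$; (ii) for each $m=1,\dots,M$, $P\mapsto\mathcal{F}(f(P))-\mathcal{F}(g_m(P))$ is an increasing function of $P\ge0$.
   Context: $\mathrm{id}$ denotes the identity function. Increasing means non-decreasing. *)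

(* Defs.v *)
From mathcomp Require Import all_boot all_order all_algebra.
Set Implicit Arguments. Unset Strict Implicit. Unset Printing Implicit Defensive.
Import Order.TTheory GRing.Theory Num.Theory.
Local Open Scope ring_scope.

Definition fmap {R : realFieldType} (A Q P : R) : R := A ^+ 2 * P + Q.

Definition gmap {R : realFieldType} (A Q C Rm P : R) : R :=
  A ^+ 2 * P + Q - A ^+ 2 * C ^+ 2 * P ^+ 2 / (C ^+ 2 * P + Rm).

Inductive gen (M : nat) : Type :=
| GenF : gen M
| GenG : 'I_M -> gen M
| GenId : gen M.

Definition gen_eval {R : realFieldType} {M : nat} (A Q : R) (C Rm : 'I_M -> R)
  (h : gen M) (P : R) : R :=
  match h with
  | GenF => fmap A Q P
  | GenG m => gmap A Q (C m) (Rm m) P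
  | GenId => P
  end.

(* comp_eval [:: h1; ...; hk] P = h1 (h2 ( ... (hk P))) *)
Definition comp_eval {R : realFieldType} {M : nat} (A Q : R) (C Rm : 'I_M -> R)
  (s : seq (gen M)) (P : R) : R :=
  foldr (fun h acc => gen_eval A Q C Rm h acc) P s.

(* Main.v *)
Require Import Defs.
From mathcomp Require Import all_boot all_order all_algebra.
From mathcomp Require Import ring lra.
Import Order.TTheory GRing.Theory Num.Theory.
Set Implicit Arguments. Unset Strict Implicit.
Local Open Scope ring_scope.

Section S.
Variable R : realFieldType.

Definition mob (a b c d x : R) := (a * x + b) / (c * x + d).

Definition good (a b c d : R) :=
  [/\ 0 <= a, 0 <= b, 0 <= c, 0 < d & 0 <= a * d - b * c].

Lemma den_gt0 a b c d x : good a b c d -> 0 <= x -> 0 < c * x + d.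
Proof. by case=> ? ? ? ? ? ?; nra. Qed.

Lemma mob_ge0 a b c d x : good a b c d -> 0 <= x -> 0 <= mob a b c d x.
Proof.
move=> g x0; have := den_gt0 g x0; case: g => ? ? ? ? ?.
rewrite /mob => hd; apply: divr_ge0; [nra | exact: ltW].
Qed.

Lemma mob_comp al be ga de a b c d x : good al be ga de -> good a b c d -> 0 <= x ->
  mob al be ga de (mob a b c d x) =
  mob (al*a+be*c) (al*b+be*d) (ga*a+de*c) (ga*b+de*d) x.
Proof.
move=> g1 g2 x0.
have hy := den_gt0 g2 x0.
have hm := mob_ge0 g2 x0.
have hz := den_gt0 g1 hm.
have hw : 0 < (ga*a+de*c) * x + (ga*b+de*d).
  case: g1 g2 => ? ? ? ? ? [? ? ? ? ?].
  have h1 : 0 <= ga * a * x by rewrite mulr_ge0 // mulr_ge0.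
  have h2 : 0 <= de * c * x by rewrite mulr_ge0 // mulr_ge0 // ltW.
  have h3 : 0 <= ga * b by rewrite mulr_ge0.
  have h4 : 0 < de * d by rewrite mulr_gt0.
  nra.
move: hz; rewrite /mob => hz.
field; by rewrite !gt_eqF.
Qed.

Lemma good_comp al be ga de a b c d : good al be ga de -> good a b c d ->
  good (al*a+be*c) (al*b+be*d) (ga*a+de*c) (ga*b+de*d).
Proof.
case=> ? ? ? ? ? [? ? ? ? ?]; split; try nra.
Qed.

Lemma gmap_mob (A Q C Rm P : R) : 0 < Rm -> 0 <= P ->
  gmap A Q C Rm P = mob (A^+2 * Rm + Q * C^+2) (Q * Rm) (C^+2) Rm P.
Proof.
move=> hR hP; have h : 0 < C^+2 * P + Rm.
  have : 0 <= C^+2 by exact: sqr_ge0.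
  nra.
rewrite /gmap /mob; field; rewrite gt_eqF //.
Qed.

Lemma leq_frac (a b c e : R) : 0 < b -> 0 < e -> a * e <= c * b -> a / b <= c / e.
Proof.
move=> hb he h; rewrite ler_pdivrMr // mulrAC ler_pdivlMr //.
Qed.


Lemma mono (K u v w z P1 P2 : R) : 0 <= K -> 0 <= u -> 0 < v -> 0 <= w -> 0 < z ->
  0 <= P1 -> P1 <= P2 ->
  K * P1 ^+ 2 / ((u * P1 + v) * (w * P1 + z)) <= K * P2 ^+ 2 / ((u * P2 + v) * (w * P2 + z)).
Proof.
move=> hK hu hv hw hz h1 h12.
have h2 : 0 <= P2 by apply: le_trans h12.
have X1 : 0 < u * P1 + v by nra.
have X2 : 0 < u * P2 + v by nra.
have Y1 : 0 < w * P1 + z by nra.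
have Y2 : 0 < w * P2 + z by nra.
apply: leq_frac; try exact: mulr_gt0.
rewrite -!mulrA; apply: ler_wpM2l => //.
rewrite -subr_ge0.
have -> : P2 * (P2 * ((u * P1 + v) * (w * P1 + z))) - P1 * (P1 * ((u * P2 + v) * (w * P2 + z)))
  = (u*z+v*w)*(P1*P2*(P2-P1)) + v*z*(P2^+2-P1^+2) by ring.
have d0 : 0 <= P2 - P1 by rewrite subr_ge0.
have d1 : 0 <= P2^+2 - P1^+2 by nra.
apply: addr_ge0; apply: mulr_ge0; try nra.
by rewrite mulr_ge0 // mulr_ge0.
Qed.

Lemma diff_eq a b c d (A Q C Rm P : R) : good a b c d -> 0 <= Q -> 0 < Rm -> 0 <= P ->
  mob a b c d (fmap A Q P) - mob a b c d (gmap A Q C Rm P) =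
  ((a * d - b * c) * A^+2 * C^+2) * P^+2 /
   ((c * A^+2 * P + (c * Q + d)) *
    ((c * (A^+2 * Rm + Q * C^+2) + d * C^+2) * P + Rm * (c * Q + d))).
Proof.
move=> g hQ hR hP.
have hf : 0 <= fmap A Q P by rewrite /fmap addr_ge0 // mulr_ge0 // sqr_ge0.
have gg : good (A^+2 * Rm + Q * C^+2) (Q * Rm) (C^+2) Rm.
  have ha := sqr_ge0 A; have hc := sqr_ge0 C.
  split; try nra.
have hgm := mob_ge0 gg hP.
rewrite gmap_mob //.
have d1 := den_gt0 g hf.
have d2 := den_gt0 g hgm.
have d3 := den_gt0 gg hP.
move: d1 d2; rewrite /mob /fmap => d1 d2.
have hc := sqr_ge0 C.
have hQ2 : 0 < c * Q + d by case: g => ? ? ? ? ?; nra.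
have e1 : 0 < c * A ^+ 2 * P + (c * Q + d) by nra.
have e2 : 0 < (c * (A^+2 * Rm + Q * C^+2) + d * C^+2) * P + Rm * (c * Q + d).
  case: g hQ2 => ha hb hcc hd _ hQ2.
  apply: ltr_wpDl; last exact: mulr_gt0.
  apply: mulr_ge0 => //; apply: addr_ge0; apply: mulr_ge0 => //.
  by case: gg. exact: ltW.
field; by rewrite !gt_eqF.
Qed.

End S.

Lemma gen_good (R : realFieldType) (M : nat) (A Q : R) (C Rm : 'I_M -> R)
  (hQ : 0 <= Q) (hR : forall m, 0 < Rm m) (h : gen M) :
  exists a b c d, good a b c d /\
    forall x, 0 <= x -> gen_eval A Q C Rm h x = mob a b c d x.
Proof.
have ha := sqr_ge0 A.
case: h => [|m|].
- exists (A^+2), Q, 0, 1; split.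
    by split; rewrite ?mulr0 ?subr0 ?mulr1 ?ltr01.
  by move=> x _; rewrite /= /fmap /mob mul0r add0r divr1.
- have hc := sqr_ge0 (C m); have hr := hR m.
  exists (A^+2 * Rm m + Q * C m ^+ 2), (Q * Rm m), (C m ^+ 2), (Rm m); split.
    by split; nra.
  by move=> x hx; rewrite /= gmap_mob.
- exists 1, 0, 0, 1; split.
    by split; rewrite ?mulr0 ?subr0 ?mulr1 ?ltr01.
  by move=> x _; rewrite /mob /= mul1r addr0 mul0r add0r divr1.
Qed.

Lemma comp_good (R : realFieldType) (M : nat) (A Q : R) (C Rm : 'I_M -> R)
  (hQ : 0 <= Q) (hR : forall m, 0 < Rm m) (s : seq (gen M)) :
  exists a b c d, good a b c d /\
    forall x, 0 <= x -> comp_eval A Q C Rm s x = mob a b c d x.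
Proof.
elim: s => [|h s [a [b [c [d [g E]]]]]].
- exists 1, 0, 0, 1; split.
    by split; rewrite ?mulr0 ?subr0 ?mulr1 ?ltr01.
  by move=> x _; rewrite /mob /= mul1r addr0 mul0r add0r divr1.
- have [al [be [ga [de [g1 E1]]]]] := @gen_good R M A Q C Rm hQ hR h.
  exists (al*a+be*c), (al*b+be*d), (ga*a+de*c), (ga*b+de*d); split.
    exact: good_comp.
  move=> x hx; rewrite /= -/(comp_eval A Q C Rm s x) E // E1; last exact: mob_ge0.
  exact: mob_comp.
Qed.

Theorem lemma5 (R : realFieldType) (M : nat) (A Q : R) (C Rm : 'I_M -> R)
  (hQ : 0 <= Q) (hR : forall m, 0 < Rm m) (s : seq (gen M)) :
  let F := comp_eval A Q C Rm s in
  ((exists a b : R, 0 <= a /\ 0 <= b /\ forall P, 0 <= P -> F P = a * P + b)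
   \/
   (exists a b c d : R, [/\ 0 <= a, 0 <= b, 0 <= c, 0 <= d & 0 <= a * d - b * c] /\
      forall P, 0 <= P -> c * P + d != 0 /\ F P = (a * P + b) / (c * P + d)))
  /\
  (forall m : 'I_M, forall P1 P2 : R, 0 <= P1 -> P1 <= P2 ->
     F (fmap A Q P1) - F (gmap A Q (C m) (Rm m) P1)
       <= F (fmap A Q P2) - F (gmap A Q (C m) (Rm m) P2)).
Proof.
move=> F.
have [a [b [c [d [g E]]]]] := @comp_good R M A Q C Rm hQ hR s.
split.
  right; exists a, b, c, d; split.
    by case: g => ? ? ? ? ?; split => //; exact: ltW.
  move=> P hP; split; last exact: E.
  by rewrite gt_eqF // (den_gt0 g hP).
move=> m P1 P2 h1 h12.
have h2 : 0 <= P2 by apply: le_trans h12.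
have hr := hR m.
have fge P : 0 <= P -> 0 <= fmap A Q P by move=> hP; rewrite /fmap addr_ge0 // mulr_ge0 // sqr_ge0.
have gge P : 0 <= P -> 0 <= gmap A Q (C m) (Rm m) P.
  move=> hP; rewrite gmap_mob //; apply: mob_ge0 => //.
  have ha := sqr_ge0 A; have hc := sqr_ge0 (C m).
  by split; nra.
rewrite /F !E ?fge ?gge // !diff_eq //.
have hc := sqr_ge0 (C m); have ha := sqr_ge0 A.
case: g => ga gb gc gd gdet.
apply: mono => //.
- by rewrite mulr_ge0 // mulr_ge0.
- by rewrite mulr_ge0.
- nra.
- apply: addr_ge0; apply: mulr_ge0 => //.
  nra.
  exact: ltW.
- apply: mulr_gt0 => //; nra.
Qed.
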